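(* Let $N\geq1$ be an integer and let $f\in L^2(\mathbb{T})$ be supported on an interval $I\subset\mathbb{T}$. Then $$\|\mathbb{E}^*_Nf\|_{L^2}\leq\Big(|I|+\frac{2}{N}\Big)^{1/2}\|f\|_{L^2}.$$
   Context: $\mathbb{T}$ is identified with $[0,1)$, with addition modulo $1$ and Lebesgue measure. For $x_0\in\mathbb{T}$ set $\tau_{x_0}f(x)=f(x-x_0)$, and set $\mathbb{E}^*_N=\frac1N\sum_{j=0}^{N-1}\tau_{j/N}$. *)

(* Defs.v *)
From HB Require Import structures.
From mathcomp Require Import all_boot all_order all_algebra.
From mathcomp Require Import all_classical all_reals all_analysis.
Set Implicit Arguments. Unset Strict Implicit. Unset Printing Implicit Defensive.
Import Order.TTheory GRing.Theory Num.Theory.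
Local Open Scope classical_set_scope.
Local Open Scope ring_scope.

(* The torus T is modelled as the set [0,1) of reals, with addition mod 1. *)
Definition frac {R : realType} (x : R) : R := x - (Num.floor x)%:~R.

Definition torus {R : realType} : set R := `[0, 1[%classic.

Definition tau {R : realType} (x0 : R) (f : R -> R) : R -> R :=
  fun x => f (frac (x - x0)).

Definition Estar {R : realType} (N : nat) (f : R -> R) : R -> R :=
  fun x => N%:R^-1 * \sum_(j < N) tau (j%:R / N%:R) f x.

(* A closed torus_arc of T starting at a with length l >= 0: { a + t mod 1 : t in [0,l] }.
   (Arcs may wrap around 0; for l >= 1 it is the whole torus.) *)
Definition torus_arc {R : realType} (a l : R) : set R :=
  [set x | torus x /\ frac (x - a) <= l].

(* A complex-valued function f = u + i v is represented by its real and
   imaginary parts.  Squared L^2 norm on T (extended real): *)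
Definition L2sq {R : realType} (u v : R -> R) : \bar R :=
  (\int[lebesgue_measure]_(x in torus) ((u x) ^+ 2 + (v x) ^+ 2)%:E)%E.

Definition L2norm {R : realType} (u v : R -> R) : \bar R := sqrte (L2sq u v).

(* Main.v *)
Require Import Defs.
From mathcomp Require Import all_boot all_order all_algebra.
From mathcomp Require Import all_classical all_reals all_analysis.
From mathcomp Require Import measurable_realfun ring lra zify.
Set Implicit Arguments. Unset Strict Implicit. Unset Printing Implicit Defensive.
Import Order.TTheory GRing.Theory Num.Theory.
Local Open Scope classical_set_scope.
Local Open Scope ring_scope.

Local Notation frac := Defs.frac.

Section S.
Context {R : realType}.

Lemma mshift (s : R) : @measurable_fun _ _ (measurableTypeR R) (measurableTypeR R) setT (fun x : R => x + s).
Proof. by apply: measurable_funD => //; exact: measurable_cst. Qed.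

Lemma shift_preimage (s : R) (A : set R) : measurable A ->
  lebesgue_measure ((fun x => x + s) @^-1` A) = lebesgue_measure A.
Proof.
move=> mA.
have := @lebesgue_measure_unique R (measure_function_pushforward__canonical__measure_function_Measure lebesgue_measure (mshift s)).
move=> H; rewrite (H _ _ mA) //.
move=> X [[x y] _ <-] /=.
rewrite /pushforward.
have -> : (fun x0 : R => x0 + s) @^-1` `]x, y] = `]x - s, y - s]%classic.
  apply/seteqP; split => z /=; rewrite !in_itv /= ltrBlDr lerBrDr //.
rewrite !lebesgue_measure_itv /=.
rewrite !lte_fin ltrD2r.
case: ifP => // _.
by rewrite -!EFinD; congr EFin; ring.
Qed.

Lemma integral_shift (s : R) (D : set R) (f : R -> \bar R) : measurable D ->
  measurable_fun D f -> (forall x, D x -> (0 <= f x)%E) ->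
  (\int[lebesgue_measure]_(x in D) f x =
   \int[lebesgue_measure]_(x in (fun x : R => (x + s)%R) @^-1` D) f (x + s)%R)%E.
Proof.
move=> mD mf f0.
rewrite -(ge0_integral_pushforward (mshift s) lebesgue_measure mD mf); last first.
  by move=> x; rewrite inE; exact: f0.
apply: eq_measure_integral; first exact: mshift.
by move=> mphi A mA _ /=; rewrite /pushforward shift_preimage.
Qed.

Lemma frac_small (y : R) : 0 <= y < 1 -> frac y = y.
Proof.
move=> hy; rewrite /frac (@floor_def _ y 0) ?subr0 //.
Qed.

Lemma frac_neg (y : R) : -1 <= y < 0 -> frac y = y + 1.
Proof.
move=> hy; rewrite /frac (@floor_def _ y (-1)).
  by rewrite mulrN1z opprK.
by rewrite addNr mulrN1z.
Qed.

Lemma frac_itv (y : R) : 0 <= frac y < 1.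
Proof.
have := floor_itv y; rewrite /frac intrD => /andP[h1 h2].
by rewrite subr_ge0 h1 /= ltrBlDl.
Qed.

Lemma fracDz (y : R) (k : int) : frac (y + k%:~R) = frac y.
Proof.
rewrite /frac floorDrz ?intr_int // intrKfloor intrD; ring.
Qed.

Lemma tor_split (c : R) : 0 <= c <= 1 -> (torus : set R) = `[0, c[ `|` `[c, 1[.
Proof.
move=> /andP[c0 c1]; apply/seteqP; split => x /=; rewrite /torus /= !in_itv /=.
  move=> /andP[x0 x1]; have [xc|xc] := ltP x c; [left|right]; apply/andP; split => //.
by move=> [] /andP[h1 h2]; apply/andP; split; lra.
Qed.

Lemma tor_disj (c : R) : [disjoint `[0, c[ & `[c, 1[]%classic.
Proof.
apply/disj_setPS => x /=; rewrite !in_itv /= => -[/andP[_ h1] /andP[h2 _]].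
lra.
Qed.

Lemma meas_shift d' (T' : measurableType d') (c : R) (g : R -> T') :
  0 <= c < 1 -> measurable_fun torus g ->
  measurable_fun torus (fun x => g (frac (x - c))).
Proof.
move=> /andP[c0 c1] mg.
rewrite (tor_split (c:=c)); last by apply/andP; split => //; exact: ltW.
apply/measurable_funU => //; split.
- apply: (@eq_measurable_fun _ _ _ _ _ (fun x : R => g (x + (1 - c))) _ _ _).
    move=> x; rewrite in_setE /= in_itv /= => /andP[x0 xc].
    by rewrite frac_neg; [congr g; ring | apply/andP; split; lra].
  apply: (measurable_comp (F := torus)) => //.
  - exact: measurable_itv.
  - move=> y [x] /= xI <-.
    move: xI; rewrite /torus /= !in_itv /= => /andP[x0 xc].
    by apply/andP; split; lra.
  - exact: measurable_funTS (mshift _).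
- apply: (@eq_measurable_fun _ _ _ _ _ (fun x : R => g (x + (- c))) _ _ _).
    move=> x; rewrite in_setE /= in_itv /= => /andP[x0 xc].
    by rewrite frac_small; [congr g; ring | apply/andP; split; lra].
  apply: (measurable_comp (F := torus)) => //.
  - exact: measurable_itv.
  - move=> y [x] /= xI <-.
    move: xI; rewrite /torus /= !in_itv /= => /andP[x0 xc].
    by apply/andP; split; lra.
  - exact: measurable_funTS (mshift _).
Qed.

Lemma integral_torus_shift (c : R) (g : R -> \bar R) : 0 <= c < 1 ->
  measurable_fun torus g -> (forall x, torus x -> (0 <= g x)%E) ->
  (\int[lebesgue_measure]_(x in torus) g (frac (x - c)) =
   \int[lebesgue_measure]_(x in torus) g x)%E.
Proof.
move=> hc mg g0; have mgs := meas_shift hc mg.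
have /andP[c0 c1] := hc.
have h1 : 0 <= c <= 1 by rewrite c0 ltW.
have h2 : 0 <= 1 - c <= 1 by apply/andP; split; lra.
have mT : measurable (torus : set R) by exact: measurable_itv.
rewrite [in LHS](tor_split h1) ge0_integral_setU //; first last.
- exact: tor_disj.
- by move=> x _; apply: g0; exact: frac_itv.
- by rewrite -tor_split.
rewrite [in RHS](tor_split h2) ge0_integral_setU //; first last.
- exact: tor_disj.
- by move=> x; rewrite -tor_split //; exact: g0.
- by rewrite -tor_split.
rewrite [in RHS]addeC; congr (_ + _)%E.
- rewrite (integral_shift (1 - c) (D := `[1 - c, 1[%classic)); first last.
  + move=> x; rewrite /= in_itv /= => /andP[x0 x1]; apply: g0.
    by rewrite /torus /= in_itv /=; apply/andP; split; lra.
  + apply: (measurable_funS mT) => // x; rewrite /torus /= !in_itv /= => /andP[x0 x1].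
    by apply/andP; split; lra.
  + exact: measurable_itv.
  have -> : (fun x : R => x + (1 - c)) @^-1` `[1 - c, 1[ = `[0, c[%classic.
    apply/seteqP; split => x /=; rewrite !in_itv /= => /andP[x0 x1];
      apply/andP; split; lra.
  apply: eq_integral => x; rewrite in_setE /= in_itv /= => /andP[x0 xc].
  by rewrite frac_neg; [congr g; ring | apply/andP; split; lra].
- rewrite (integral_shift (- c) (D := `[0, 1 - c[%classic)); first last.
  + move=> x; rewrite /= in_itv /= => /andP[x0 x1]; apply: g0.
    by rewrite /torus /= in_itv /=; apply/andP; split; lra.
  + apply: (measurable_funS mT) => // x; rewrite /torus /= !in_itv /= => /andP[x0 x1].
    by apply/andP; split; lra.
  + exact: measurable_itv.
  have -> : (fun x : R => x + (- c)) @^-1` `[0, 1 - c[ = `[c, 1[%classic.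
    apply/seteqP; split => x /=; rewrite !in_itv /= => /andP[x0 x1];
      apply/andP; split; lra.
  apply: eq_integral => x; rewrite in_setE /= in_itv /= => /andP[x0 xc].
  by rewrite frac_small; [congr g; ring | apply/andP; split; lra].
Qed.
End S.


Section C.
Context {R : realType}.

Lemma cs_weighted (n : nat) (c w : 'I_n -> R) : (forall j, 0 <= c j) ->
  (\sum_j c j * w j) ^+ 2 <= (\sum_j c j) * \sum_j c j * w j ^+ 2.
Proof.
move=> c0.
set C := \sum_j c j; set S := \sum_j c j * w j; set Q := \sum_j c j * w j ^+ 2.
have E : \sum_j c j * (C * w j - S) ^+ 2 = C * (C * Q - S ^+ 2).
  have -> : \sum_j c j * (C * w j - S) ^+ 2 = \sum_j (C^+2 * (c j * w j ^+ 2)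
      - (2 * C * S) * (c j * w j) + S ^+ 2 * c j).
    by apply: eq_bigr => j _; ring.
  rewrite big_split sumrB /= -!mulr_sumr -/Q -/S -/C; ring.
have ge : 0 <= \sum_j c j * (C * w j - S) ^+ 2.
  by apply: sumr_ge0 => j _; rewrite mulr_ge0 // sqr_ge0.
have C0 : 0 <= C by apply: sumr_ge0.
rewrite E in ge.
move: C0; rewrite le_eqVlt => /orP[/eqP C0|Cp].
  have cj : forall j, c j = 0.
    by move=> j; apply: (psumr_eq0P (P := xpredT)) => // i _; exact: c0.
  have -> : S = 0 by rewrite /S big1 // => j _; rewrite cj mul0r.
  by rewrite -C0 expr0n /= mul0r.
rewrite -subr_ge0; move: ge; rewrite pmulr_rge0 //.
Qed.

Lemma count_le (n : nat) (z : R) : 0 <= z ->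
  \sum_(k < n) (((k%:R : R) <= z)%R%:R : R) <= n%:R /\
  \sum_(k < n) (((k%:R : R) <= z)%R%:R : R) <= z + 1.
Proof.
move=> z0; elim: n => [|n [IH1 IH2]].
  by rewrite big_ord0; split => //; lra.
rewrite big_ord_recr /= -addn1 natrD.
case: (leP (n%:R) z) => h /=.
  by split; lra.
by rewrite addr0; split; lra.
Qed.

Lemma count_frac (N : nat) (y l : R) : (0 < N)%N -> 0 <= l ->
  \sum_(j < N) ((frac (y - j%:R / N%:R) <= l)%R%:R : R) <= N%:R /\
  \sum_(j < N) ((frac (y - j%:R / N%:R) <= l)%R%:R : R) <= N%:R * l + 1.
Proof.
move=> N0 l0.
have Np : (0 : R) < N%:R by rewrite ltr0n.
pose p (j : 'I_N) := frac (y - j%:R / N%:R).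
pose q (j : 'I_N) := Num.floor (N%:R * p j).
have hp j : 0 <= p j < 1 := frac_itv _.
have q0 j : 0 <= q j.
  by rewrite floor_ge0 mulr_ge0 // ?ler0n //; case/andP: (hp j).
have qN j : (`|q j| < N)%N.
  have : q j < N%:Z.
    rewrite floor_lt_int -pmulrn.
    by rewrite -[X in _ < X]mulr1 ltr_pM2l //; case/andP: (hp j).
  by move: (q0 j); lia.
pose h (j : 'I_N) : 'I_N := Ordinal (qN j).
have hinj : injective h.
  move=> j k /(congr1 val) /= eqa.
  have eq : q j = q k by rewrite -(gez0_abs (q0 j)) -(gez0_abs (q0 k)) eqa.
  set ej := Num.floor (y - j%:R / N%:R); set ek := Num.floor (y - k%:R / N%:R).
  have pj : p j = y - j%:R / N%:R - ej%:~R by [].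
  have pk : p k = y - k%:R / N%:R - ek%:~R by [].
  have hj : (q k)%:~R <= N%:R * p j < (q k + 1)%:~R by rewrite -eq; exact: floor_itv.
  have hk : (q k)%:~R <= N%:R * p k < (q k + 1)%:~R by exact: floor_itv.
  rewrite intrD in hj hk.
  move: hj hk => /andP[hj1 hj2] /andP[hk1 hk2].
  pose zz : int := (k%:Z - j%:Z) + N%:Z * (ek - ej).
  have ezz : (zz%:~R : R) = N%:R * p j - N%:R * p k.
    rewrite /zz pj pk !intrD !intrM !intrB -!pmulrn; field.
    by rewrite pnatr_eq0 -lt0n.
  have z1 : zz < 1.
    have : (zz%:~R : R) < 1%:~R by rewrite ezz; lra.
    by rewrite ltr_int.
  have z2 : -1 < zz.
    have : ((-1)%:~R : R) < zz%:~R by rewrite ezz intrN; lra.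
    by rewrite ltr_int.
  apply: val_inj => /=.
  have jN := ltn_ord j; have kN := ltn_ord k.
  rewrite /zz in z1 z2.
  have NZ : (0 < N%:Z)%R by rewrite ltz_nat.
  have hd : ek - ej = 0.
    case: (ltrgt0P (ek - ej)) => hd //.
    - have : (N%:Z * 1 <= N%:Z * (ek - ej))%R by rewrite ler_pM2l // -gtz0_ge1.
      by lia.
    - have : (N%:Z * (ek - ej) <= N%:Z * (-1))%R by rewrite ler_pM2l // lez_addr1 ?addrC //; lia.
      by lia.
  rewrite hd mulr0 addr0 in z1 z2.
  lia.
have key : \sum_(j < N) ((frac (y - j%:R / N%:R) <= l)%R%:R : R) <=
    \sum_(k < N) (((k%:R : R) <= N%:R * l)%R%:R : R).
  apply: (le_trans (y := \sum_(j < N) ((((h j)%:R : R) <= N%:R * l)%R%:R : R))).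
    apply: ler_sum => j _.
    rewrite -/(p j).
    have [pl|pl] := leP (p j) l; last by rewrite ler0n.
    have -> : (((h j)%:R : R) <= N%:R * l) = true.
      rewrite /= natr_absz ger0_norm //.
      apply: (le_trans (floor_le _)).
      by rewrite ler_pM2l.
    by [].
  rewrite (reindex_inj hinj (P := xpredT) (F := fun k : 'I_N => (((k%:R : R) <= N%:R * l)%R%:R : R))).
  by [].
have [c1 c2] := count_le N (mulr_ge0 (ler0n _ N) l0).
by split; apply: (le_trans key).
Qed.
End C.



Lemma arc_lower (R : realType) (a l : R) : 0 <= a < 1 -> 0 <= l ->
  measurable (torus_arc a l) /\
  (0 <= lebesgue_measure (torus_arc a l) <= 1)%E /\
  (l <= 1 -> (l%:E <= lebesgue_measure (torus_arc a l))%E) /\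
  (1 <= l -> (1 <= lebesgue_measure (torus_arc a l))%E).
Proof.
move=> ha l0.
have mT : measurable (torus : set R) by exact: measurable_itv.
set B := `]-oo, l]%classic : set R.
have mB : measurable B by exact: measurable_itv.
have arcE : torus_arc a l = torus `&` (fun x => frac (x - a)) @^-1` B.
  apply/seteqP; split => x /=; rewrite /B /= in_itv /=; by case.
have mfr : measurable_fun torus (fun x : R => frac (x - a)).
  by apply: (meas_shift (c := a) (g := fun x : R => x) ha).
have marc : measurable (torus_arc a l) by rewrite arcE; exact: mfr.
have sub : torus_arc a l `<=` torus by move=> x [].
have mE : lebesgue_measure (torus_arc a l) = lebesgue_measure (B `&` torus).
  rewrite -(setIidl sub) -integral_indic //.
  transitivity (\int[lebesgue_measure]_(x in torus) (\1_B (frac (x - a)))%:E)%E.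
    apply: eq_integral => x; rewrite in_setE => tx.
    rewrite !indicE.
    suff -> : (x \in torus_arc a l) = (frac (x - a) \in B) by [].
    apply/idP/idP; rewrite !in_setE /=.
      by case.
    by move=> h; rewrite /torus_arc /=; split.
  transitivity (\int[lebesgue_measure]_(x in torus) (\1_B x)%:E)%E.
    apply: (integral_torus_shift (g := fun x => (\1_B x)%:E) ha).
    - by apply/measurable_EFinP; exact: measurable_indic.
    - by move=> x _; rewrite lee_fin.
  by rewrite integral_indic.
split => //; split.
  apply/andP; split; first exact: measure_ge0.
  have : (lebesgue_measure (torus_arc a l) <= lebesgue_measure (torus : set R))%E.
    by rewrite le_measure // inE.
  by rewrite /torus lebesgue_measure_itv /= lte01 -EFinD subr0.
split => hl.
  rewrite mE.
  apply: (@le_trans _ _ (lebesgue_measure (`[0, l[%classic : set R))).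
    rewrite lebesgue_measure_itv /=.
    case: ifPn => [_|]; first by rewrite -EFinD subr0.
    by rewrite lte_fin -leNgt => hl0; rewrite lee_fin; lra.
  rewrite le_measure // ?inE //; try exact: measurable_itv; first by apply: measurableI.
  move=> x /=; rewrite /B /torus /= !in_itv /= => /andP[x0 xl]; split.
    exact: ltW.
  by apply/andP; split => //; lra.
rewrite mE.
apply: (@le_trans _ _ (lebesgue_measure (`[0, 1[%classic : set R))).
  by rewrite lebesgue_measure_itv /= lte01 -EFinD subr0.
rewrite le_measure // ?inE //; try exact: measurable_itv; first by apply: measurableI.
move=> x /=; rewrite /B /torus /= !in_itv /= => /andP[x0 xl]; split.
  by rewrite (le_trans (ltW xl)).
by apply/andP; split.
Qed.

Unset Implicit Arguments. Set Strict Implicit. Set Printing Implicit Defensive.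

Theorem lemma2p6 (R : realType) (N : nat) (u v : R -> R) (a l : R) :
  (1 <= N)%N ->
  0 <= a < 1 -> 0 <= l ->
  measurable_fun torus u -> measurable_fun torus v ->
  (L2sq u v < +oo)%E ->
  (forall x, torus x -> ~ torus_arc a l x -> u x = 0 /\ v x = 0) ->
  (L2norm (Estar N u) (Estar N v)
     <= sqrte (lebesgue_measure (torus_arc a l) + (2 / N%:R)%:E) * L2norm u v)%E.
Proof.
move=> N1 ha l0 mu mv Lfin supp.
have mT : measurable (torus : set R) by exact: measurable_itv.
have Np : (0 : R) < N%:R by rewrite ltr0n.
have [marc [/andP[m0 m1] [mlo mhi]]] := arc_lower ha l0.
set m := lebesgue_measure (torus_arc a l) in m0 m1 mlo mhi *.
have mfin : m \is a fin_num by rewrite ge0_fin_numE // (le_lt_trans m1) // ltry.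
set K := fine m + 2 / N%:R.
have mK : (m + (2 / N%:R)%:E = K%:E)%E by rewrite /K EFinD fineK.
have K0 : 0 <= K by rewrite /K addr_ge0 ?fine_ge0 // divr_ge0 // ler0n.
pose F x := u x ^+ 2 + v x ^+ 2.
have mF : measurable_fun torus F.
  by apply: measurable_funD; apply: measurable_funX.
have F0 x : 0 <= F x by rewrite /F addr_ge0 // sqr_ge0.
pose c (j : 'I_N) : R := j%:R / N%:R.
have hc j : 0 <= c j < 1.
  rewrite /c divr_ge0 ?ler0n //= ltr_pdivrMr // mul1r ltr_nat.
  exact: ltn_ord.
set L := L2sq u v.
have L0 : (0 <= L)%E by apply: integral_ge0 => x _; rewrite lee_fin addr_ge0 // sqr_ge0.
have Lfn : L \is a fin_num by rewrite ge0_fin_numE.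
have mE (g : R -> R) : measurable_fun (torus : set R) g -> measurable_fun (torus : set R) (Estar N g).
  move=> mg.
  have ms j : measurable_fun torus (fun x => g (frac (x - c j))).
    exact: (meas_shift (hc j) mg).
  have msum := measurable_sum (index_enum 'I_N) ms.
  have := measurable_funM (measurable_cst (N%:R^-1 : R)) msum.
  by apply: eq_measurable_fun => x _.
have pw x : torus x -> (Estar N u x) ^+ 2 + (Estar N v x) ^+ 2 <=
    (K / N%:R) * \sum_(j < N) F (frac (x - c j)).
  move=> tx.
  have Nn0 : N%:R != 0 :> R by rewrite pnatr_eq0 -lt0n.
  pose b (j : 'I_N) := (frac ((x - a) - j%:R / N%:R) <= l)%R.
  pose cw (j : 'I_N) : R := (b j)%:R.
  have cw0 j : 0 <= cw j by rewrite /cw ler0n.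
  have vanish j : ~~ b j -> u (frac (x - c j)) = 0 /\ v (frac (x - c j)) = 0.
    move=> nb; apply: supp.
      by have := frac_itv (x - c j); rewrite /torus /= in_itv /=.
    move=> [_ h]; move/negP: nb; apply.
    rewrite /b.
    have -> : frac (x - a - j%:R / N%:R) = frac (frac (x - c j) - a).
      have -> : frac (x - c j) - a = (x - a - j%:R / N%:R) + (- Num.floor (x - c j))%:~R.
        by rewrite /frac intrN /c; ring.
      by rewrite fracDz.
    exact: h.
  have cwu j : cw j * u (frac (x - c j)) = u (frac (x - c j)).
    rewrite /cw; case hb: (b j); first by rewrite mul1r.
    by rewrite (vanish j (negbT hb)).1 mulr0.
  have cwv j : cw j * v (frac (x - c j)) = v (frac (x - c j)).
    rewrite /cw; case hb: (b j); first by rewrite mul1r.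
    by rewrite (vanish j (negbT hb)).2 mulr0.
  set A := \sum_(j < N) u (frac (x - c j)).
  set B := \sum_(j < N) v (frac (x - c j)).
  set P := \sum_(j < N) u (frac (x - c j)) ^+ 2.
  set Q := \sum_(j < N) v (frac (x - c j)) ^+ 2.
  set C := \sum_(j < N) cw j.
  have hA : A ^+ 2 <= C * P.
    have -> : A = \sum_(j < N) cw j * u (frac (x - c j)) by apply: eq_bigr => j _; rewrite cwu.
    have -> : P = \sum_(j < N) cw j * u (frac (x - c j)) ^+ 2.
      by apply: eq_bigr => j _; rewrite expr2 mulrA cwu.
    exact: cs_weighted.
  have hB : B ^+ 2 <= C * Q.
    have -> : B = \sum_(j < N) cw j * v (frac (x - c j)) by apply: eq_bigr => j _; rewrite cwv.
    have -> : Q = \sum_(j < N) cw j * v (frac (x - c j)) ^+ 2.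
      by apply: eq_bigr => j _; rewrite expr2 mulrA cwv.
    exact: cs_weighted.
  have P0 : 0 <= P by apply: sumr_ge0 => j _; exact: sqr_ge0.
  have Q0 : 0 <= Q by apply: sumr_ge0 => j _; exact: sqr_ge0.
  have [C1 C2] := count_frac (x - a) N1 l0.
  have CK : C <= N%:R * K.
    have fm : fine m = fine m by [].
    have NK : N%:R * K = N%:R * fine m + 2 by rewrite /K; field.
    rewrite NK.
    have [l1|l1] := leP l 1.
      have : l <= fine m by move: (mlo l1); rewrite -(fineK mfin) lee_fin.
      move=> lm.
      have : N%:R * l <= N%:R * fine m by rewrite ler_pM2l.
      rewrite /C /cw /b; lra.
    have : 1 <= fine m by move: (mhi (ltW l1)); rewrite -(fineK mfin) lee_fin.
    move=> lm.
    have : N%:R * 1 <= N%:R * fine m by rewrite ler_pM2l.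
    rewrite /C /cw /b; lra.
  have SF : \sum_(j < N) F (frac (x - c j)) = P + Q by rewrite -big_split.
  have -> : Estar N u x = N%:R^-1 * A by [].
  have -> : Estar N v x = N%:R^-1 * B by [].
  rewrite SF !exprMn -mulrDr.
  have -> : K / N%:R * (P + Q) = N%:R^-1 ^+ 2 * (N%:R * K * (P + Q)) by field.
  rewrite ler_pM2l ?exprn_gt0 ?invr_gt0 //.
  have : C * (P + Q) <= N%:R * K * (P + Q) by rewrite ler_wpM2r // addr_ge0.
  rewrite !mulrDr; lra.
have I1 : (\int[lebesgue_measure]_(x in torus) ((Estar N u x) ^+ 2 + (Estar N v x) ^+ 2)%:E
   <= \int[lebesgue_measure]_(x in torus) ((K / N%:R) * \sum_(j < N) F (frac (x - c j)))%:E)%E.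
  apply: ge0_le_integral => //.
  - by move=> x _; rewrite lee_fin addr_ge0 // sqr_ge0.
  - apply/measurable_EFinP; apply: measurable_funD; apply: measurable_funX; exact: mE.
  - apply/measurable_EFinP; apply: measurableT_comp => //.
    apply: measurable_sum => j.
    exact: (meas_shift (c := c j) (hc j) mF).
have I2 : (\int[lebesgue_measure]_(x in torus) ((K / N%:R) * \sum_(j < N) F (frac (x - c j)))%:E
   = K%:E * L)%E.
  under eq_integral => x _ do rewrite EFinM -sumEFin.
  rewrite ge0_integralZl //; first last.
  - by rewrite lee_fin divr_ge0 // ler0n.
  - by move=> x _; rewrite sume_ge0 // => j _; rewrite lee_fin.
  - apply: emeasurable_sum => j; apply/measurable_EFinP.
    exact: (meas_shift (c := c j) (hc j) mF).
  rewrite ge0_integral_sum //; first last.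
  - by move=> j x _; rewrite lee_fin.
  - move=> j; apply/measurable_EFinP.
    exact: (meas_shift (c := c j) (hc j) mF).
  have IS j : (\int[lebesgue_measure]_(x in torus) (F (frac (x - c j)))%:E = L)%E.
    apply: (integral_torus_shift (g := fun x => (F x)%:E) (hc j)).
    - by apply/measurable_EFinP.
    - by move=> x _; rewrite lee_fin.
  under eq_bigr => j _ do rewrite IS.
  rewrite -(fineK Lfn) sumEFin sumr_const card_ord -!EFinM; congr EFin.
  rewrite -mulr_natl; field.
  by rewrite pnatr_eq0 -lt0n.
rewrite mK /L2norm -sqrteM ?lee_fin // lee_sqrt; last by rewrite mule_ge0 // lee_fin.
by rewrite (le_trans I1) // I2.
Qed.
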